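(* Let $\omega\in\mathcal{M}_W$ and $\sigma>0$. There exist positive constants $c_{\sigma,\omega},C_{\sigma,\omega}$ such that for all $\phi$ on $\mathbb{R}^2$, \[ c_{\sigma,\omega}^{-1}\|\phi\|_{\dot H^\sigma_\omega\cap L^2_\omega}\le\|\phi\|_{\dot H^\sigma_\omega}+\|\phi\|_{L^2}\le c_{\sigma,\omega}\|\phi\|_{\dot H^\sigma_\omega\cap L^2_\omega}, \] \[ C_{\sigma,\omega}^{-1}\|\phi\|_{H^\sigma_\omega}\le\|\phi\|_{\dot H^\sigma_\omega}+\|\phi\|_{L^2}\le C_{\sigma,\omega}\|\phi\|_{H^\sigma_\omega}. \]
   Context: $\|f\|_{\dot H^\sigma_\omega}=\||\xi|^\sigma\omega(|\xi|)\hat f\|_{L^2}$, $\|f\|_{H^\sigma_\omega}=\|(1+|\xi|^2)^{\sigma/2}\omega(|\xi|)\hat f\|_{L^2}$, $L^2_\omega=H^0_\omega$, $\|f\|_{X\cap Y}=(\|f\|_X^2+\|f\|_Y^2)^{1/2}$. (O1) $w\in C^1([0,\infty))$, $w>0$, $w'\ge0$; (O2) $rw'(r)\le Cw(r)$ for all $r\ge0$; (O3) $w(r_1r_2)\le C(w(r_1)+w(r_2))$ for all $r_1,r_2\ge0$. $\mathcal{M}_W$ is the set of quotients $\omega_a/\omega_b$ with $\omega_a,\omega_b$ satisfying (O1)–(O3). *)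

(* Defs.v *)
From HB Require Import structures.
From mathcomp Require Import all_boot all_order all_algebra.
From mathcomp Require Import all_classical all_reals all_analysis.
Set Implicit Arguments. Unset Strict Implicit. Unset Printing Implicit Defensive.
Import Order.TTheory GRing.Theory Num.Theory numFieldNormedType.Exports.
Local Open Scope classical_set_scope.
Local Open Scope ring_scope.

Section Defs.
Context {R : realType}.

(* (O1): w in C^1([0,oo)), w > 0, w' >= 0.  [dw] is the derivative of [w] on
   [0,oo): the two-sided derivative at r > 0 and the right derivative at 0;
   it is continuous on [0,oo). *)
Definition is_C1_deriv_on_nonneg (w dw : R -> R) : Prop :=
  {within `[0, +oo[, continuous dw} /\
  (forall r : R, 0 < r -> is_derive r 1 w (dw r)) /\
  ((fun h : R => h^-1 * (w h - w 0)) @ 0^'+ --> dw 0).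

Definition O1 (w : R -> R) (dw : R -> R) : Prop :=
  is_C1_deriv_on_nonneg w dw /\
  (forall r : R, 0 <= r -> 0 < w r) /\
  (forall r : R, 0 <= r -> 0 <= dw r).

Definition O2 (w dw : R -> R) : Prop :=
  exists C : R, forall r : R, 0 <= r -> r * dw r <= C * w r.

Definition O3 (w : R -> R) : Prop :=
  exists C : R, forall r1 r2 : R, 0 <= r1 -> 0 <= r2 ->
    w (r1 * r2) <= C * (w r1 + w r2).

Definition admissible_weight (w : R -> R) : Prop :=
  exists dw : R -> R, [/\ O1 w dw, O2 w dw & O3 w].

(* M_W : quotients omega_a / omega_b of weights satisfying (O1)-(O3)
   (only the values on [0,oo) matter). *)
Definition in_MW (omega : R -> R) : Prop :=
  exists wa wb : R -> R, [/\ admissible_weight wa, admissible_weight wb &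
    forall r : R, 0 <= r -> omega r = wa r / wb r].

Definition leb2 := (@lebesgue_measure R \x @lebesgue_measure R)%E.

Definition eucl_norm (xi : R * R) : R := Num.sqrt (xi.1 ^+ 2 + xi.2 ^+ 2).

(* For a function phi on R^2 with Fourier transform [phihat],
   ||phi||_{Hdot^sigma_omega} = || |xi|^sigma omega(|xi|) phihat ||_{L^2}. *)
Definition hom_norm (sigma : R) (omega : R -> R) (phihat : R * R -> R)
  : \bar R :=
  Lnorm leb2 2%:E
    (fun xi => ((eucl_norm xi) `^ sigma * omega (eucl_norm xi) * phihat xi)%:E).

Definition inhom_norm (sigma : R) (omega : R -> R) (phihat : R * R -> R)
  : \bar R :=
  Lnorm leb2 2%:E
    (fun xi => ((1 + eucl_norm xi ^+ 2) `^ (sigma / 2) * omega (eucl_norm xi)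
                 * phihat xi)%:E).

Definition L2w_norm (omega : R -> R) (phihat : R * R -> R) : \bar R :=
  inhom_norm 0 omega phihat.

Definition L2_norm (phihat : R * R -> R) : \bar R :=
  inhom_norm 0 (fun _ => 1) phihat.

Definition cap_norm (a b : \bar R) : \bar R :=
  ((a `^ 2 + b `^ 2) `^ (2^-1))%E.

End Defs.

(* Main.v *)
Require Import Defs.
From HB Require Import structures.
From mathcomp Require Import all_boot all_order all_algebra.
From mathcomp Require Import all_classical all_reals all_analysis.
From mathcomp Require Import lra ring measurable_realfun.
Import Order.TTheory GRing.Theory Num.Theory numFieldNormedType.Exports.
Local Open Scope ring_scope.

Module Helpers.
Local Open Scope classical_set_scope.
Local Open Scope ring_scope.

Section W.
Context {R : realType}.

Lemma w_mono_pos (w dw : R -> R) : O1 w dw ->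
  forall x y : R, 0 < x -> x <= y -> w x <= w y.
Proof.
move=> [[_ [hd _]] [_ hdw]] x y x0 xy.
have hd' : forall r, 0 < r -> derivable w r 1 /\ derive1 w r = dw r.
  move=> r r0; have := hd r r0 => H; split; first exact: ex_derive.
  by rewrite derive1E derive_val.
apply: (@ger0_derive1_ndecry _ w x) => //.
- by move=> r; rewrite in_itv/= andbT => xr; apply: (hd' r (lt_trans x0 xr)).1.
- move=> r; rewrite in_itv/= => /andP[xr _].
  by rewrite (hd' r (lt_trans x0 xr)).2 hdw// ltW// (lt_trans x0 xr).
- apply: derivable_within_continuous => r; rewrite in_itv/= => /andP[xr _].
  by apply: (hd' r (lt_le_trans x0 xr)).1.
Qed.

Lemma w_mono (w dw : R -> R) : O1 w dw ->
  forall x y : R, 0 <= x -> x <= y -> w x <= w y.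
Proof.
move=> hO x y x0 xy.
have [x0'|] := ltP 0 x; first exact: (w_mono_pos _ _ hO _ _ x0' xy).
move=> x0'; have -> : x = 0 by apply/le_anti; rewrite x0 x0'.
have [y0|y0] := ltP 0 y; last first.
  by have -> : y = 0 by apply/le_anti; rewrite y0 (le_trans x0 xy).
have [[_ [_ hc]] [_ hdw]] := hO.
rewrite leNgt; apply/negP => wlt.
have hq := cvgr_gt (dw 0) hc (-1) (lt_le_trans (ltrN10 R) (hdw 0 (lexx _))).
near (0:R)^'+ => h.
have h0 : 0 < h by near: h; exact: nbhs_right_gt.
have hy : h < y by near: h; exact: nbhs_right_lt.
have hd : h < w 0 - w y by near: h; apply: nbhs_right_lt; rewrite subr_gt0.
have hqh : -1 < h^-1 * (w h - w 0) by near: h; exact: hq.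
have : w h <= w y by apply: (w_mono_pos _ _ hO) => //; exact: ltW.
move=> H2.
have e : h^-1 * (w h - w 0) * h = w h - w 0 by field; rewrite gt_eqF.
have H : -1 * h < h^-1 * (w h - w 0) * h by rewrite ltr_pM2r.
rewrite e in H; lra.
Unshelve. all: by end_near. Qed.

Lemma half_pow (r : R) : 0 <= r -> r `^ 2^-1 * r `^ 2^-1 = r.
Proof.
move=> r0; have [->|rn0] := eqVneq r 0.
  by rewrite powR0 ?mulr0 // invr_neq0.
by rewrite -powRD ?rn0 ?implybT // -div1r -splitr powRr1.
Qed.

Lemma w_growth (w : R -> R) (sigma : R) : admissible_weight w -> 0 < sigma ->
  exists K : R, 0 < K /\ forall r : R, 1 <= r -> w r <= K * r `^ sigma.
Proof.
move=> [dw [hO1 _ [C hC]]] s0.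
have hpos := hO1.2.1.
have hmono := w_mono _ _ hO1.
set D := C + C.
have D0 : 0 < D.
  have := hC 1 1 ler01 ler01; rewrite mulr1 => H.
  have w1 := hpos 1 ler01.
  have ww : 0 < w 1 + w 1 by rewrite addr_gt0.
  have := lt_le_trans w1 H; rewrite (pmulr_lgt0 _ ww) => C0.
  by rewrite /D addr_gt0.
set r0 := Num.max 2 (D `^ (2 / sigma)).
have r02 : 2 <= r0 by rewrite /r0 le_max lexx.
have r01 : 1 <= r0 by rewrite (le_trans _ r02) // ler1n.
have r0D : D <= r0 `^ (sigma / 2).
  rewrite (@le_trans _ _ ((D `^ (2 / sigma)) `^ (sigma / 2))) //.
    rewrite -powRrM mulrC mulf_div (mulrC sigma) divff ?powRr1 //.
      by rewrite ltW.
    by rewrite mulf_neq0 // ?gt_eqF.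
  apply: ge0_ler_powR => //; first by rewrite divr_ge0 // ltW.
  - by rewrite nnegrE powR_ge0.
  - by rewrite nnegrE (le_trans _ r01).
  by rewrite /r0 le_max lexx orbT.
exists (w r0); split; first by apply: hpos; rewrite (le_trans _ r01).
set b := fun n => iter n (fun x : R => x * x) r0.
have b2 : forall n, 2 <= b n.
  elim=> [//|n IH] /=; rewrite -/(b n).
  by rewrite (le_trans IH) // ler_peMr // (le_trans _ IH) // ler1n.
have bn : forall n : nat, n%:R + 2 <= b n.
  elim=> [|n IH]; first by rewrite add0r.
  rewrite /= -/(b n) (@le_trans _ _ (b n + 2)) //.
    by rewrite lerD2r (le_trans _ IH) // -natr1 lerD2l ler1n.
  have := b2 n; rewrite -/(b n) => h2.
  rewrite (@le_trans _ _ (b n * 2)) //; first by rewrite mulr_natr mulr2n lerD2l.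
  by rewrite ler_pM2l // (lt_le_trans _ h2).
have claim : forall n r, 1 <= r -> r <= b n -> w r <= w r0 * r `^ sigma.
  have base : forall r, 1 <= r -> r <= r0 -> w r <= w r0 * r `^ sigma.
    move=> r r1 rr0; rewrite (le_trans (hmono r r0 (le_trans ler01 r1) rr0)) //.
    rewrite ler_peMr //; first by rewrite ltW // hpos // (le_trans _ r01).
    by rewrite -(powRr0 r) ler_powR // ltW.
  elim=> [|n IH] r r1 rbn; first exact: base.
  have [rr0|r0r] := leP r r0; first exact: base.
  set s := r `^ 2^-1.
  have s1 : 1 <= s by rewrite /s -[X in X <= _](powRr0 r) ler_powR // invr_ge0 ler0n.
  have sb : s <= b n.
    have := rbn; rewrite /= -/(b n) => H.
    have bn0 : 0 <= b n by rewrite (le_trans _ (b2 n)).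
    rewrite -(half_pow _ bn0) /s -powRM // ?(le_trans ler01 r1) //.
    rewrite ge0_ler_powR // ?invr_ge0 ?ler0n // ?nnegrE ?(le_trans ler01 r1) //.
    by rewrite mulr_ge0.
  have r0' : 0 <= r by rewrite (le_trans ler01 r1).
  have s0' : 0 <= s by rewrite /s powR_ge0.
  have := hC s s s0' s0'; rewrite half_pow // => H.
  have IHs := IH s s1 sb.
  rewrite (le_trans H) // -/D.
  have -> : C * (w s + w s) = D * w s by rewrite /D; ring.
  have ss : s `^ sigma = r `^ (sigma / 2).
    by rewrite /s -powRrM mulrC.
  have rr : r `^ sigma = r `^ (sigma / 2) * r `^ (sigma / 2).
    rewrite -powRD; first by rewrite -splitr.
    by apply/implyP => _; rewrite gt_eqF // (lt_le_trans ltr01 r1).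
  rewrite rr mulrA (le_trans (ler_wpM2l (ltW D0) IHs)) // ss mulrA.
  rewrite [D * _]mulrC -!mulrA ler_wpM2l //.
    by rewrite ltW // hpos // (le_trans _ r01).
  rewrite ler_wpM2r ?powR_ge0 //.
  rewrite (le_trans r0D) // ge0_ler_powR // ?nnegrE ?(le_trans _ r01) //.
    by rewrite divr_ge0 // ltW.
  by rewrite ltW.
move=> r r1.
have r0' : 0 <= r by rewrite (le_trans ler01 r1).
have := archi_boundP r0'; set n := Num.Def.archi_bound r => rn.
apply: (claim n) => //; rewrite (le_trans (ltW rn)) // (le_trans _ (bn n)) //.
by rewrite lerDl.
Qed.
End W.


Section LN.
Context d (T : measurableType d) (R : realType) (mu : {measure set T -> \bar R}).
Local Notation N f := (Lnorm mu 2%:E (fun x => (f x)%:E)).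

Lemma LN_unfold (f : T -> R) :
  N f = ((\int[mu]_x ((`|f x| `^ 2)%:E)) `^ 2^-1)%E.
Proof.
by rewrite unlock.
Qed.

Lemma mpow (f : T -> R) : measurable_fun setT f ->
  measurable_fun setT ((fun x => (`|f x| `^ 2)%:E) : T -> \bar R).
Proof.
move=> mf; apply/measurable_EFinP.
exact: (measurableT_comp (measurable_powR 2)
  (measurableT_comp (@normr_measurable R setT) mf)).
Qed.

Lemma half_mono (a b : \bar R) : (0 <= a)%E -> (a <= b)%E ->
  (a `^ 2^-1 <= b `^ 2^-1)%E.
Proof.
move=> a0 ab; have H := @gt0_ler_poweR R 2^-1; rewrite invr_ge0 ler0n in H.
by apply: (H isT) => //; rewrite in_itv /= leey andbT // (le_trans a0 ab).
Qed.

Lemma LN_mono (f g : T -> R) : measurable_fun setT f -> measurable_fun setT g ->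
  (forall x, `|f x| <= `|g x|) -> (N f <= N g)%E.
Proof.
move=> mf mg fg; rewrite !LN_unfold.
apply: half_mono; first by apply: integral_ge0 => x _; rewrite lee_fin powR_ge0.
apply: ge0_le_integral; first exact: measurableT.
- by move=> x _; rewrite lee_fin powR_ge0.
- exact: mpow.
- exact: mpow.
by move=> x _; rewrite lee_fin ge0_ler_powR // nnegrE.
Qed.

Lemma LN_scale (k : R) (f : T -> R) : 0 <= k -> measurable_fun setT f ->
  N (fun x => k * f x) = (k%:E * N f)%E.
Proof.
move=> k0 mf; rewrite !LN_unfold.
under eq_integral do rewrite normrM powRM // ger0_norm // EFinM.
rewrite ge0_integralZl_EFin; last 4 first.
- exact: measurableT.
- by move=> x _; rewrite lee_fin powR_ge0.
- exact: mpow.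
- by rewrite powR_ge0.
rewrite poweRM ?lee_fin ?powR_ge0 //; last first.
  by apply: integral_ge0 => x _; rewrite lee_fin powR_ge0.
by rewrite poweR_EFin -powRrM mulfV ?powRr1.
Qed.

Lemma LN_add (f g : T -> R) : measurable_fun setT f -> measurable_fun setT g ->
  (N (fun x => f x + g x) <= N f + N g)%E.
Proof.
move=> mf mg; have := @eminkowski _ _ _ mu f g 2%:E mf mg.
by apply; rewrite lee_fin ler1n.
Qed.

Lemma LN_abs (f : T -> R) : N (fun x => `|f x|) = N f.
Proof. by rewrite !LN_unfold; under eq_integral do rewrite normr_id. Qed.

Lemma LN_ge0 (f : T -> R) : (0 <= N f)%E.
Proof. exact: Lnorm_ge0. Qed.

Lemma LN_bound (h f g : T -> R) (K : R) : 0 <= K ->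
  measurable_fun setT h -> measurable_fun setT f -> measurable_fun setT g ->
  (forall x, `|h x| <= K * (`|f x| + `|g x|)) ->
  (N h <= K%:E * (N f + N g))%E.
Proof.
move=> K0 mh mf mg hb.
have maf : measurable_fun setT (fun x => `|f x|) by exact: measurableT_comp.
have mag : measurable_fun setT (fun x => `|g x|) by exact: measurableT_comp.
have mKf : measurable_fun setT (fun x => K * `|f x|).
  by apply: measurable_funM => //; exact: measurable_cst.
have mKg : measurable_fun setT (fun x => K * `|g x|).
  by apply: measurable_funM => //; exact: measurable_cst.
apply: (@le_trans _ _ (N (fun x => K * `|f x| + K * `|g x|))).
  apply: LN_mono => //; first exact: measurable_funD.
  by move=> x; rewrite (le_trans (hb x)) // -mulrDr ler_norm.
apply: (le_trans (LN_add _ _ mKf mKg)).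
rewrite (LN_scale _ _ K0 maf) (LN_scale _ _ K0 mag) !LN_abs.
by rewrite muleDr // ge0_adde_def // inE LN_ge0.
Qed.

End LN.


Section Cap.
Context {R : realType}.

Lemma sq_half (x : R) : 0 <= x -> (x `^ 2) `^ 2^-1 = x.
Proof. by move=> x0; rewrite -powRrM mulfV ?powRr1. Qed.

Lemma cap_fin (x y : R) : cap_norm x%:E y%:E = ((x `^ 2 + y `^ 2) `^ 2^-1)%:E.
Proof. by rewrite /cap_norm !poweR_EFin. Qed.

Lemma cap_y (b : \bar R) : (0 <= b)%E -> cap_norm +oo b = +oo%E.
Proof.
move=> b0; rewrite /cap_norm (@poweRyr _ 2) // addye.
  by rewrite poweRyr // invr_neq0.
by rewrite gt_eqF // (@lt_le_trans _ _ 0%E) // poweR_ge0.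
Qed.

Lemma capC (a b : \bar R) : cap_norm a b = cap_norm b a.
Proof. by rewrite /cap_norm addeC. Qed.

Lemma cap_ge (a b : \bar R) : (0 <= a)%E -> (0 <= b)%E -> (a <= cap_norm a b)%E.
Proof.
case: a => [x| |] a0 b0 //; last by rewrite cap_y.
case: b b0 => [y| |] b0 //; last by rewrite capC cap_y ?leey.
move: a0 b0; rewrite !lee_fin => x0 y0.
rewrite -{1}(sq_half _ x0) ge0_ler_powR ?nnegrE ?powR_ge0 ?invr_ge0 //.
  by rewrite addr_ge0 ?powR_ge0.
by rewrite lerDl powR_ge0.
Qed.

Lemma cap_le (a b : \bar R) : (0 <= a)%E -> (0 <= b)%E -> (cap_norm a b <= a + b)%E.
Proof.
case: a => [x| |] a0 b0 //; last first.
  by rewrite addye ?leey // gt_eqF // (@lt_le_trans _ _ 0%E).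
case: b b0 => [y| |] b0 //; last by rewrite addey ?leey.
move: a0 b0; rewrite !lee_fin => x0 y0.
rewrite -[X in (_ <= X)%R](@sq_half (x + y)) ?addr_ge0 //.
rewrite ge0_ler_powR ?nnegrE ?powR_ge0 ?invr_ge0 ?addr_ge0 ?powR_ge0 //.
rewrite !powR_mulrn ?addr_ge0 //; nra.
Qed.

Lemma cap_sum (a b : \bar R) : (0 <= a)%E -> (0 <= b)%E ->
  (a + b <= 2%:E * cap_norm a b)%E.
Proof.
move=> a0 b0; have -> : (2%:E = 1 + 1)%E by [].
rewrite ge0_muleDl // !mul1e leeD // ?cap_ge // capC cap_ge //.
Qed.
End Cap.


Section Om.
Context {R : realType}.

Lemma omega_props (omega : R -> R) (sigma : R) : in_MW omega -> 0 < sigma ->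
  exists U M : R, [/\ 0 < U, 0 < M, (forall r, 0 <= r -> 0 < omega r),
    (forall r, 0 <= r -> r <= 1 -> omega r <= U) &
    (forall r, 0 <= r -> 1 <= M * (1 + r `^ sigma) * omega r)].
Proof.
move=> [wa [wb [Ha Hb Heq]]] s0.
have [Kb [Kb0 hKb]] := w_growth _ _ Hb s0.
case: Ha => [dwa [Oa _ _]]; case: Hb => [dwb [Ob _ _]].
have pa := Oa.2.1; have pb := Ob.2.1.
have ma := w_mono _ _ Oa; have mb := w_mono _ _ Ob.
have A0 : 0 < wa 0 by exact: pa.
have B0 : 0 < wb 0 by exact: pb.
have a1 : 0 < wa 1 by exact: pa.
have b1 : 0 < wb 1 by exact: pb.
exists (wa 1 / wb 0), (wb 1 / wa 0 + Kb / wa 0); split.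
- by rewrite divr_gt0.
- by rewrite addr_gt0 // divr_gt0.
- by move=> r r0; rewrite Heq // divr_gt0 // ?pa ?pb.
- move=> r r0 r1; rewrite Heq //.
  apply: ler_pM.
  + exact: ltW (pa _ r0).
  + by rewrite invr_ge0 ltW // pb.
  + exact: ma.
  by rewrite lef_pV2 ?posrE ?pb // mb.
move=> r r0; rewrite Heq //.
have ar : wa 0 <= wa r by rewrite ma.
have br : 0 < wb r by rewrite pb.
have [r1|r1] := leP r 1.
  have om : wa 0 / wb 1 <= wa r / wb r.
    apply: ler_pM => //.
    + exact: ltW.
    + by rewrite invr_ge0 ltW.
    by rewrite lef_pV2 ?posrE // mb.
  rewrite (@le_trans _ _ (wb 1 / wa 0 * 1 * (wa 0 / wb 1))) //.
    by rewrite mulr1 mulrA divfK ?gt_eqF // divff ?gt_eqF.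
  apply: ler_pM => //.
  + by rewrite mulr1 divr_ge0 // ltW.
  + by rewrite divr_ge0 // ltW.
  apply: ler_pM => //.
  + by rewrite divr_ge0 // ltW.
  + by rewrite lerDl divr_ge0 // ltW.
  by rewrite lerDl powR_ge0.
have P0 : 0 < r `^ sigma by rewrite powR_gt0 // (lt_trans ltr01).
have om : wa 0 / (Kb * r `^ sigma) <= wa r / wb r.
  apply: ler_pM => //.
  + exact: ltW.
  + by rewrite invr_ge0 ltW // mulr_gt0.
  by rewrite lef_pV2 ?posrE ?mulr_gt0 // hKb // ltW.
rewrite (@le_trans _ _ (Kb / wa 0 * r `^ sigma * (wa 0 / (Kb * r `^ sigma)))) //.
  rewrite le_eqVlt; apply/orP; left; apply/eqP; field.
  by rewrite !gt_eqF.
apply: ler_pM => //.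
+ by rewrite mulr_ge0 // ?divr_ge0 // ltW.
+ by rewrite divr_ge0 // ltW // mulr_gt0.
apply: ler_pM => //.
+ by rewrite divr_ge0 // ltW.
+ exact: ltW.
+ by rewrite lerDr divr_ge0 // ltW.
by rewrite lerDr.
Qed.

End Om.


Section Meas.
Context {R : realType}.

Lemma sqrt_nd : nondecreasing_fun (@Num.sqrt R).
Proof.
move=> x y xy; have [x0|x0] := leP x 0.
  by rewrite ler0_sqrtr // sqrtr_ge0.
by rewrite ler_sqrt // (le_trans (ltW x0) xy).
Qed.

Lemma meucl : measurable_fun [set: R * R] (@eucl_norm R).
Proof.
rewrite /eucl_norm.
apply: (measurableT_comp (nondecreasing_measurable measurableT sqrt_nd)).
apply: measurable_funD.
  by apply: measurable_funX; exact: measurable_fst.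
by apply: measurable_funX; exact: measurable_snd.
Qed.

Lemma eucl_ge0 (xi : R * R) : 0 <= eucl_norm xi.
Proof. exact: sqrtr_ge0. Qed.

Lemma mw_ext (w dw : R -> R) : O1 w dw -> measurable_fun [set: R] (fun r => w (Order.max r 0)).
Proof.
move=> hO; apply: nondecreasing_measurable => // x y xy.
have h1 : 0 <= Order.max x 0 by rewrite le_max lexx orbT.
have h2 : Order.max x 0 <= Order.max y 0 by rewrite ge_max !le_max xy lexx !orbT.
exact: (w_mono _ _ hO _ _ h1 h2).
Qed.

Lemma momega (omega : R -> R) : in_MW omega ->
  measurable_fun [set: R * R] (fun xi => omega (eucl_norm xi)).
Proof.
move=> [wa [wb [[dwa [Oa _ _]] [dwb [Ob _ _]] Heq]]].
have -> : (fun xi => omega (eucl_norm xi)) =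
  (fun xi => wa (Order.max (eucl_norm xi) 0) * (wb (Order.max (eucl_norm xi) 0))^-1).
  apply: funext => xi; have e0 := eucl_ge0 xi.
  by rewrite Heq // max_l.
apply: measurable_funM.
  exact: (measurableT_comp (mw_ext _ _ Oa) meucl).
have mi : measurable_fun [set: R] (fun r => (wb (Order.max r 0))^-1).
  apply: nonincreasing_measurable => // x y xy.
  have p : forall z, 0 < wb (Order.max z 0) by move=> z; apply: Ob.2.1; rewrite le_max lexx orbT.
  rewrite lef_pV2 ?posrE //.
  have h1 : 0 <= Order.max x 0 by rewrite le_max lexx orbT.
  have h2 : Order.max x 0 <= Order.max y 0 by rewrite ge_max !le_max xy lexx !orbT.
  exact: (w_mono _ _ Ob _ _ h1 h2).
exact: (measurableT_comp mi meucl).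
Qed.

End Meas.


Section PW.
Context {R : realType}.
Variables (sigma : R) (s0 : 0 < sigma).

Lemma P_ge1 (r : R) : 1 <= r -> 1 <= r `^ sigma.
Proof. by move=> r1; rewrite -[X in X <= _](powRr0 r) ler_powR // ltW. Qed.

Lemma P_sq (r : R) : 0 <= r -> (r ^+ 2) `^ (sigma / 2) = r `^ sigma.
Proof.
move=> r0; rewrite -powR_mulrn // -powRrM; congr (_ `^ _).
by rewrite mulrC -mulrA mulVf ?mulr1.
Qed.

Lemma pD (r : R) : 0 <= r -> r `^ sigma <= (1 + r ^+ 2) `^ (sigma / 2).
Proof.
move=> r0; have s2 : 0 <= sigma / 2 by rewrite divr_ge0 // ltW.
rewrite -P_sq // ge0_ler_powR // ?nnegrE ?addr_ge0 ?sqr_ge0 //.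
by rewrite lerDr.
Qed.

Lemma Q_ge1 (r : R) : 1 <= (1 + r ^+ 2) `^ (sigma / 2).
Proof.
have s2 : 0 <= sigma / 2 by rewrite divr_ge0 // ltW.
rewrite -[X in X <= _](powRr0 (1 + r ^+ 2)) ler_powR //.
by rewrite lerDl sqr_ge0.
Qed.

Lemma pQ (r : R) : 0 <= r ->
  (1 + r ^+ 2) `^ (sigma / 2) <= 2 `^ (sigma / 2) * (1 + r `^ sigma).
Proof.
move=> r0.
have s2 : 0 <= sigma / 2 by rewrite divr_ge0 // ltW.
have T0 : 0 <= 2 `^ (sigma / 2) by rewrite powR_ge0.
have [r1|r1] := leP r 1.
  rewrite (@le_trans _ _ (2 `^ (sigma / 2))) //.
    have : r ^+ 2 <= 1 by rewrite expr_le1.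
    move=> h; apply: ge0_ler_powR => //; rewrite ?nnegrE; try lra.
    by rewrite addr_ge0 ?sqr_ge0.
  by rewrite ler_peMr // lerDl powR_ge0.
rewrite (@le_trans _ _ ((2 * r ^+ 2) `^ (sigma / 2))) //.
  have : 1 <= r ^+ 2 by rewrite expr_ge1 // ltW.
  move=> h; apply: ge0_ler_powR => //; rewrite ?nnegrE; try lra.
rewrite powRM ?sqr_ge0 // P_sq // ler_wpM2l //.
by rewrite lerDr.
Qed.

Variables (U M W r : R).
Hypotheses (U0 : 0 < U) (M0 : 0 < M) (r0 : 0 <= r) (W0 : 0 < W)
  (hU : r <= 1 -> W <= U) (hM : 1 <= M * (1 + r `^ sigma) * W).

Lemma pA : W <= (U + 1) * (r `^ sigma * W + 1).
Proof.
have P0 := powR_ge0 r sigma.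
have [r1|r1] := leP r 1.
  have := hU r1; have : 0 <= U * (r `^ sigma * W) by rewrite !mulr_ge0 // ltW.
  have : 0 <= r `^ sigma * W by rewrite mulr_ge0 // ltW.
  nra.
have P1 := P_ge1 _ (ltW r1).
have : W <= r `^ sigma * W by rewrite ler_peMl // ltW.
have : 0 <= U * (r `^ sigma * W) by rewrite !mulr_ge0 // ltW.
have : 0 <= r `^ sigma * W by rewrite mulr_ge0 // ltW.
move=> h1 h2 h3; rewrite mulrDl mulrDr mul1r mulr1.
have := ltW U0; lra.
Qed.

Lemma pB : 1 <= M * (r `^ sigma * W + W).
Proof. by rewrite (le_trans hM) // le_eqVlt; apply/orP; left; apply/eqP; ring. Qed.

Lemma pC : (1 + r ^+ 2) `^ (sigma / 2) * W <=
  2 `^ (sigma / 2) * (U + 2) * (r `^ sigma * W + 1).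
Proof.
have := pQ _ r0; have := pA; have T0 : 0 <= 2 `^ (sigma / 2) by rewrite powR_ge0.
have P0 := powR_ge0 r sigma.
set T := 2 `^ (sigma / 2); set P := r `^ sigma; set Q := (1 + r ^+ 2) `^ (sigma / 2).
move=> hA hQ.
rewrite (@le_trans _ _ (T * (1 + P) * W)) //.
  by rewrite ler_wpM2r // ltW.
have h1 : T * W <= T * ((U + 1) * (P * W + 1)) by rewrite ler_wpM2l.
have h2 : T * (P * W) <= T * (P * W + 1) by rewrite ler_wpM2l // lerDl.
have -> : T * (1 + P) * W = T * W + T * (P * W) by ring.
have -> : T * (U + 2) * (P * W + 1) = T * ((U + 1) * (P * W + 1)) + T * (P * W + 1) by ring.
exact: lerD.
Qed.

Lemma pE : 1 <= M * ((1 + r ^+ 2) `^ (sigma / 2) * W + (1 + r ^+ 2) `^ (sigma / 2) * W).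
Proof.
have := pD _ r0; have := Q_ge1 r.
move=> hQ hP.
rewrite (le_trans hM) // -mulrDl mulrA.
apply: ler_wpM2r; first exact: ltW.
apply: ler_wpM2l; first exact: ltW.
lra.
Qed.

End PW.


Section H.
Context {R : realType}.
Lemma absb (a b c K p : R) : 0 <= a -> 0 <= b -> 0 <= c -> a <= K * (b + c) ->
  `|a * p| <= K * (`|b * p| + `|c * p|).
Proof.
move=> a0 b0 c0 h; rewrite !normrM (ger0_norm a0) (ger0_norm b0) (ger0_norm c0).
by rewrite -mulrDl mulrA ler_wpM2r.
Qed.

Local Open Scope ereal_scope.
Lemma fin_le (x y : \bar R) (a c : R) : (0 < c)%R -> (0 <= a)%R -> (a <= c)%R ->
  0 <= y -> x <= a%:E * y -> c^-1%:E * x <= y.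
Proof.
move=> c0 a0 ac y0 h.
rewrite (@le_trans _ _ (c^-1%:E * (a%:E * y))) //.
  by apply: lee_wpmul2l => //; rewrite lee_fin invr_ge0 ltW.
rewrite muleA -EFinM -[leRHS]mul1e; apply: lee_wpmul2r => //.
by rewrite lee_fin ler_pdivrMl // mulr1.
Qed.

Lemma up_le (x y : \bar R) (a c : R) : (a <= c)%R -> 0 <= y ->
  x <= a%:E * y -> x <= c%:E * y.
Proof. by move=> ac y0 h; rewrite (le_trans h) // lee_wpmul2r. Qed.

Lemma comb (x y : \bar R) (a : R) : (0 <= a)%R -> 0 <= x -> 0 <= y ->
  x + a%:E * (x + y) <= (1 + a)%:E * (x + y).
Proof.
move=> a0 x0 y0; rewrite EFinD ge0_muleDl ?lee_fin // mul1e.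
by rewrite leeD2r // leeDl.
Qed.

Lemma comb2 (x : \bar R) (a : R) : (0 <= a)%R -> 0 <= x ->
  x + a%:E * (x + x) = (1 + a + a)%:E * x.
Proof.
move=> a0 x0; rewrite !EFinD !ge0_muleDl ?lee_fin ?addr_ge0 // mul1e.
by rewrite ge0_muleDr // addeA.
Qed.
End H.


End Helpers.
Import Helpers.

Theorem lemma6p2 (R : realType) (omega : R -> R) (sigma : R) :
  in_MW omega -> 0 < sigma ->
  exists c C : R, [/\ 0 < c, 0 < C &
    forall phihat : R * R -> R, measurable_fun setT phihat ->
      [/\ (c^-1%:E * cap_norm (hom_norm sigma omega phihat) (L2w_norm omega phihat)
             <= hom_norm sigma omega phihat + L2_norm phihat)%E,
          (hom_norm sigma omega phihat + L2_norm phihat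
             <= c%:E * cap_norm (hom_norm sigma omega phihat) (L2w_norm omega phihat))%E,
          (C^-1%:E * inhom_norm sigma omega phihat
             <= hom_norm sigma omega phihat + L2_norm phihat)%E &
          (hom_norm sigma omega phihat + L2_norm phihat
             <= C%:E * inhom_norm sigma omega phihat)%E]].
Proof.
move=> hMW s0.
have [U [M [U0 M0 Wpos hU hM]]] := omega_props _ _ hMW s0.
set T := 2 `^ (sigma / 2).
have T0 : 0 <= T by rewrite powR_ge0.
set K1 := U + 1; set K3 := T * (U + 2).
have K10 : 0 <= K1 by rewrite addr_ge0 // ltW.
have K30 : 0 <= K3 by rewrite mulr_ge0 // addr_ge0 // ltW.
exists (2 * (1 + K1 + M)), (1 + K3 + M + M); split.
- lra.
- lra.
move=> phihat mphi.
have mO := momega _ hMW.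
have mP : measurable_fun setT (fun xi : R * R => eucl_norm xi `^ sigma).
  exact: (measurableT_comp (measurable_powR sigma) meucl).
have mQ : forall s, measurable_fun setT (fun xi : R * R => (1 + eucl_norm xi ^+ 2) `^ s).
  move=> s; apply: (measurableT_comp (measurable_powR s)).
  by apply: measurable_funD => //; apply: measurable_funX; exact: meucl.
have mH : measurable_fun setT
    (fun xi => eucl_norm xi `^ sigma * omega (eucl_norm xi) * phihat xi).
  by apply: measurable_funM => //; apply: measurable_funM.
have mI : forall s, measurable_fun setT
    (fun xi => (1 + eucl_norm xi ^+ 2) `^ s * omega (eucl_norm xi) * phihat xi).
  by move=> s; apply: measurable_funM => //; apply: measurable_funM.
have mL : measurable_fun setT
    (fun xi => (1 + eucl_norm xi ^+ 2) `^ (0 / 2) * 1 * phihat xi).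
  by apply: measurable_funM => //; apply: measurable_funM.
have e0 : forall x : R, (1 + x) `^ (0 / 2) = 1 by move=> x; rewrite mul0r powRr0.
set H := hom_norm sigma omega phihat.
set W := L2w_norm omega phihat.
set L := L2_norm phihat.
set I := inhom_norm sigma omega phihat.
have H0 : (0 <= H)%E by exact: Lnorm_ge0.
have W0 : (0 <= W)%E by exact: Lnorm_ge0.
have L0 : (0 <= L)%E by exact: Lnorm_ge0.
have I0 : (0 <= I)%E by exact: Lnorm_ge0.
have hA : (W <= K1%:E * (H + L))%E.
  rewrite /W /H /L /L2w_norm /L2_norm /inhom_norm /hom_norm.
  apply: LN_bound; [exact: K10|exact: mI|exact: mH|exact: mL|] => xi.
  have r0 := @eucl_ge0 R xi; have w0 := Wpos _ r0.
  apply: absb; try (by rewrite ?e0 ?mul1r ?mulr_ge0 ?powR_ge0 // ltW).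
  rewrite ?e0 ?mul1r ?mulr1.
  exact: (pA _ s0 _ _ _ U0 w0 (hU _ r0)).
have hB : (L <= M%:E * (H + W))%E.
  rewrite /W /H /L /L2w_norm /L2_norm /inhom_norm /hom_norm.
  apply: LN_bound; [exact: ltW|exact: mL|exact: mH|exact: mI|] => xi.
  have r0 := @eucl_ge0 R xi; have w0 := Wpos _ r0.
  apply: absb; try (by rewrite ?e0 ?mul1r ?mulr_ge0 ?powR_ge0 // ltW).
  rewrite ?e0 ?mul1r ?mulr1.
  exact: (pB _ _ _ _ (hM _ r0)).
have hC : (I <= K3%:E * (H + L))%E.
  rewrite /I /H /L /L2w_norm /L2_norm /inhom_norm /hom_norm.
  apply: LN_bound; [exact: K30|exact: mI|exact: mH|exact: mL|] => xi.
  have r0 := @eucl_ge0 R xi; have w0 := Wpos _ r0.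
  apply: absb; try (by rewrite ?e0 ?mul1r ?mulr_ge0 ?powR_ge0 // ltW).
  rewrite ?e0 ?mul1r ?mulr1.
  rewrite /K3 /T; exact: (pC _ s0 _ _ _ U0 r0 w0 (hU _ r0)).
have hD : (H <= I)%E.
  rewrite /I /H /inhom_norm /hom_norm.
  apply: LN_mono; [exact: mH|exact: mI|] => xi.
  have r0 := @eucl_ge0 R xi; have w0 := Wpos _ r0.
  rewrite !normrM ler_wpM2r // ler_wpM2r // ?normr_ge0 // !ger0_norm ?powR_ge0 //.
  exact: (pD _ s0 _ r0).
have hE : (L <= M%:E * (I + I))%E.
  rewrite /I /L /L2_norm /inhom_norm.
  apply: LN_bound; [exact: ltW|exact: mL|exact: mI|exact: mI|] => xi.
  have r0 := @eucl_ge0 R xi; have w0 := Wpos _ r0.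
  apply: absb; try (by rewrite ?e0 ?mul1r ?mulr_ge0 ?powR_ge0 // ltW).
  rewrite ?e0 ?mul1r ?mulr1.
  exact: (pE _ s0 _ _ _ M0 r0 w0 (hM _ r0)).
have c0 : (0 < 2 * (1 + K1 + M))%R by lra.
split.
- apply: (@fin_le R _ _ (1 + K1) _) => //.
  + lra.
  + lra.
    by rewrite adde_ge0.
  apply: (le_trans (cap_le _ _ H0 W0)); apply: (le_trans _ (comb _ _ _ K10 H0 L0)).
  by rewrite leeD2l.
- apply: (@up_le R _ _ (2 * (1 + M)) _).
  + lra.
  + by rewrite /cap_norm poweR_ge0.
  rewrite (mulrC 2) EFinM -muleA.
  apply: (le_trans _ (lee_wpmul2l _ (cap_sum _ _ H0 W0))); last first.
    by rewrite lee_fin; lra.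
  apply: (le_trans _ (comb _ _ _ (ltW M0) H0 W0)).
  by rewrite leeD2l.
- apply: (@fin_le R _ _ (K3) _) => //.
  + lra.
  + lra.
  by rewrite adde_ge0.
apply: (@up_le R _ _ (1 + M + M) _) => //.
  lra.
rewrite -(comb2 _ _ (ltW M0) I0).
by apply: leeD.
Qed.
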